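(* Let $\mathcal W,\mathcal V$ be arbitrary measurable spaces. Let $h_\star=\langle f_\star,g_\star\rangle$, $\hat h=\langle\hat f,\hat g\rangle$ with measurable $f_\star,\hat f:\mathcal W\to\mathbb R^p$, $g_\star,\hat g:\mathcal V\to\mathbb R^p$ (all relevant expectations finite), and let $\mathcal D_{\mathcal W,i}$, $\mathcal D_{\mathcal V,j}$ ($i,j\in\{1,2\}$) be distributions with $\mathcal D_{i\otimes j}:=\mathcal D_{\mathcal W,i}\otimes\mathcal D_{\mathcal V,j}$. Suppose that for all $(i,j)\ne(2,2)$: $\mathcal R(\hat h;\mathcal D_{i\otimes j})\le\epsilon^2$ and $\mathbb E_{\mathcal D_{i\otimes j}}[h_\star(w,v)^2]\le M_\star^2$, and that $\epsilon<\sigma_\star/2$, where $\sigma_\star^2:=\sigma_p(\mathbb E_{\mathcal D_{\mathcal W,1}}[f_\star f_\star^\top])\,\sigma_p(\mathbb E_{\mathcal D_{\mathcal V,1}}[g_\star g_\star^\top])>0$. Then $\mathcal R(\hat h;\mathcal D_{2\otimes2})\le 64\,\epsilon^2\frac{M_\star^4}{\sigma_\star^4}$.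
   Context: For a scalar predictor $\hat h$ and distribution $\mathcal D$ on $\mathcal W\times\mathcal V$, $\mathcal R(\hat h;\mathcal D):=\mathbb E_{(w,v)\sim\mathcal D}[(h_\star(w,v)-\hat h(w,v))^2]$. $\sigma_p$ denotes the $p$-th largest singular value. *)

(* Defs.v *)
From HB Require Import structures.
From mathcomp Require Import all_boot all_order all_algebra.
From mathcomp Require Import all_classical all_reals all_analysis.
Set Implicit Arguments. Unset Strict Implicit. Unset Printing Implicit Defensive.
Import Order.TTheory GRing.Theory Num.Theory.
Local Open Scope ring_scope.
Local Open Scope classical_set_scope.

Definition l2norm {R : realType} {p : nat} (x : 'cV[R]_p) : R :=
  Num.sqrt (\sum_(i < p) (x i 0) ^+ 2).

(* sigma_p(A): the p-th largest (= smallest) singular value of a square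
   p x p real matrix, i.e. min_{|x| = 1} |A x| (Courant-Fischer). *)
Definition sigma_min {R : realType} {p : nat} (A : 'M[R]_p) : R :=
  inf [set l2norm (A *m x) | x in [set x : 'cV[R]_p | l2norm x = 1]].

Definition bilin {R : realType} {p : nat} {W V : Type}
  (f : W -> 'I_p -> R) (g : V -> 'I_p -> R) (w : W) (v : V) : R :=
  \sum_(i < p) f w i * g v i.

Definition second_moment {R : realType} {d} {T : measurableType d} {p : nat}
  (P : probability T R) (f : T -> 'I_p -> R) : 'M[R]_p :=
  \matrix_(i < p, j < p) Rintegral P setT (fun x => f x i * f x j).

Definition risk {R : realType} {dW dV} {W : measurableType dW}
  {V : measurableType dV} {p : nat}
  (PW : probability W R) (PV : probability V R)
  (fs fh : W -> 'I_p -> R) (gs gh : V -> 'I_p -> R) : \bar R :=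
  (\int[(PW \x PV)%E]_z ((bilin fs gs z.1 z.2 - bilin fh gh z.1 z.2) ^+ 2)%:E)%E.

Definition sq_moment {R : realType} {dW dV} {W : measurableType dW}
  {V : measurableType dV} {p : nat}
  (PW : probability W R) (PV : probability V R)
  (f : W -> 'I_p -> R) (g : V -> 'I_p -> R) : \bar R :=
  (\int[(PW \x PV)%E]_z ((bilin f g z.1 z.2) ^+ 2)%:E)%E.

(* Main.v *)
Require Import Defs.
From HB Require Import structures.
From mathcomp Require Import all_boot all_order all_algebra.
From mathcomp Require Import all_classical all_reals all_analysis.
From mathcomp Require Import lra ring measurable_realfun.
Import numFieldNormedType.Exports.
Import Order.TTheory GRing.Theory Num.Theory.
Local Open Scope ring_scope.
Local Open Scope classical_set_scope.
Set Implicit Arguments.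
Unset Strict Implicit.
Unset Printing Implicit Defensive.
Section LA.
Variable R : realType.
Variable n : nat.
Implicit Types (u v x y : 'cV[R]_n) (A K : 'M[R]_n).

Definition dot u v : R := \sum_i u i 0 * v i 0.
Definition nsq u := dot u u.

Lemma dotC u v : dot u v = dot v u.
Proof. by apply: eq_bigr => i _; rewrite mulrC. Qed.

Lemma dotDl u v x : dot (u + v) x = dot u x + dot v x.
Proof. by rewrite /dot -big_split; apply: eq_bigr => i _; rewrite mxE mulrDl. Qed.

Lemma dotDr u v x : dot x (u + v) = dot x u + dot x v.
Proof. by rewrite dotC dotDl !(dotC x). Qed.

Lemma dotZl (a : R) u v : dot (a *: u) v = a * dot u v.
Proof. by rewrite /dot mulr_sumr; apply: eq_bigr => i _; rewrite mxE mulrA. Qed.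

Lemma dotZr (a : R) u v : dot u (a *: v) = a * dot u v.
Proof. by rewrite dotC dotZl dotC. Qed.

Lemma dotNl u v : dot (- u) v = - dot u v.
Proof. by rewrite -scaleN1r dotZl mulN1r. Qed.

Lemma dotNr u v : dot u (- v) = - dot u v.
Proof. by rewrite dotC dotNl dotC. Qed.

Lemma dotBl u v x : dot (u - v) x = dot u x - dot v x.
Proof. by rewrite dotDl dotNl. Qed.

Lemma dotBr u v x : dot x (u - v) = dot x u - dot x v.
Proof. by rewrite dotDr dotNr. Qed.

Lemma dot0l u : dot 0 u = 0.
Proof. by rewrite /dot big1 // => i _; rewrite mxE mul0r. Qed.

Lemma dot0r u : dot u 0 = 0.
Proof. by rewrite dotC dot0l. Qed.

Lemma dotE u v : dot u v = (u^T *m v) 0 0.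
Proof. by rewrite mxE; apply: eq_bigr => i _; rewrite mxE. Qed.

Lemma dot_mulmx u A v : dot u (A *m v) = dot (A^T *m u) v.
Proof. by rewrite !dotE trmx_mul trmxK mulmxA. Qed.

Lemma nsq_ge0 u : 0 <= nsq u.
Proof. by apply: sumr_ge0 => i _; rewrite -expr2 sqr_ge0. Qed.

Lemma nsq_eq0 u : nsq u = 0 -> u = 0.
Proof.
move=> /eqP; rewrite psumr_eq0; last by move=> i _; rewrite -expr2 sqr_ge0.
move=> /allP H; apply/matrixP => i j; rewrite (ord1 j) mxE.
have := H i (mem_index_enum _); rewrite -expr2 sqrf_eq0 => /eqP //.
Qed.

Lemma l2normE u : l2norm u = Num.sqrt (nsq u).
Proof. by rewrite /l2norm /nsq /dot; congr Num.sqrt; apply: eq_bigr => i _; rewrite expr2. Qed.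

Lemma disc_le (a b c : R) : 0 <= c -> (forall t, 0 <= a + 2 * t * b + t ^+ 2 * c) ->
  b ^+ 2 <= a * c.
Proof.
move=> c0 H; have [cz|cp] := eqVneq c 0.
  subst c; have [bz|bn] := eqVneq b 0; first by subst b; rewrite expr2 !mul0r mulr0.
  have := H (- (a + 1) / (2 * b)).
  have -> : a + 2 * (- (a + 1) / (2 * b)) * b + (- (a + 1) / (2 * b)) ^+ 2 * 0 = -1.
    by rewrite mulr0 addr0; field.
  lra.
have cp' : 0 < c by rewrite lt_def cp c0.
have := H (- b / c).
have -> : a + 2 * (- b / c) * b + (- b / c) ^+ 2 * c = a - b ^+ 2 / c.
  by field.
rewrite subr_ge0 ler_pdivrMr //.
Qed.

Lemma psd_cs K : K^T = K -> (forall x, 0 <= dot x (K *m x)) ->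
  forall x y, dot x (K *m y) ^+ 2 <= dot x (K *m x) * dot y (K *m y).
Proof.
move=> Ks Kp x y; apply: disc_le => // t.
have := Kp (x + t *: y).
rewrite mulmxDr dotDl !dotDr -scalemxAr !dotZl !dotZr.
have -> : dot y (K *m x) = dot x (K *m y) by rewrite dot_mulmx Ks dotC.
by move=> H; rewrite expr2; lra.
Qed.

Lemma cs u v : dot u v ^+ 2 <= nsq u * nsq v.
Proof.
have := @psd_cs 1%:M (trmx1 _ _) (fun x => ltac:(rewrite mul1mx; exact: nsq_ge0)) u v.
by rewrite !mul1mx.
Qed.
End LA.
Section LA2.
Variable R : realType.
Variable n : nat.
Implicit Types (u v x y : 'cV[R]_n) (A K : 'M[R]_n).

Definition l2 u := Num.sqrt (nsq u).

Lemma l2_ge0 u : 0 <= l2 u. Proof. exact: sqrtr_ge0. Qed.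
Lemma sqr_l2 u : l2 u ^+ 2 = nsq u. Proof. by rewrite sqr_sqrtr // nsq_ge0. Qed.

Lemma dot_le u v : `|dot u v| <= l2 u * l2 v.
Proof.
rewrite -(ler_pXn2r (_ : 0 < 2)%N) ?nnegrE ?mulr_ge0 ?l2_ge0 //.
by rewrite exprMn !sqr_l2 real_normK ?num_real // cs.
Qed.

Lemma nsqD u v : nsq (u + v) = nsq u + 2 * dot u v + nsq v.
Proof. rewrite /nsq dotDl !dotDr (dotC v u); ring. Qed.

Lemma nsqB u v : nsq (u - v) = nsq u - 2 * dot u v + nsq v.
Proof. rewrite /nsq dotDl !dotDr !dotNl !dotNr (dotC v u) opprK; ring. Qed.

Lemma nsqZ (a : R) u : nsq (a *: u) = a ^+ 2 * nsq u.
Proof. by rewrite /nsq dotZl dotZr mulrA expr2. Qed.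

Lemma l2D u v : l2 (u + v) <= l2 u + l2 v.
Proof.
rewrite -(ler_pXn2r (_ : 0 < 2)%N) ?nnegrE ?addr_ge0 ?l2_ge0 //.
rewrite sqr_l2 nsqD sqrrD !sqr_l2 mulr2n.
have := le_trans (ler_norm _) (dot_le u v); lra.
Qed.

Definition frob A := \sum_i \sum_j A i j ^+ 2.

Lemma frob_ge0 A : 0 <= frob A.
Proof. by apply: sumr_ge0 => i _; apply: sumr_ge0 => j _; exact: sqr_ge0. Qed.

Lemma frob_tr A : frob A^T = frob A.
Proof. by rewrite /frob exchange_big; apply: eq_bigr => i _; apply: eq_bigr => j _; rewrite mxE. Qed.

Lemma nsq_mul A x : nsq (A *m x) <= frob A * nsq x.
Proof.
rewrite /frob mulr_suml; apply: ler_sum => i _.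
have -> : (A *m x) i 0 * (A *m x) i 0 = (dot (row i A)^T x) ^+ 2.
  by rewrite expr2 mxE /dot; congr (_ * _); apply: eq_bigr => j _; rewrite !mxE.
have -> : \sum_j A i j ^+ 2 = nsq (row i A)^T.
  by rewrite /nsq /dot; apply: eq_bigr => j _; rewrite !mxE expr2.
exact: cs.
Qed.

Lemma frob_cols A : \sum_k nsq (A *m delta_mx k 0) = frob A.
Proof.
rewrite /frob exchange_big; apply: eq_bigr => k _; rewrite /nsq /dot.
apply: eq_bigr => i _; rewrite -colE !mxE expr2 //.
Qed.

Lemma l2_mul A x : l2 (A *m x) <= Num.sqrt (frob A) * l2 x.
Proof. by rewrite /l2 -sqrtrM ?frob_ge0 // ler_sqrt ?nsq_mul // mulr_ge0 ?frob_ge0 ?nsq_ge0. Qed.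

Lemma sigma_min_ge0 A : 0 <= sigma_min A.
Proof.
rewrite /sigma_min; set S := [set _ | _ in _].
have [[z Sz]|ne] := pselect (exists z, S z); last first.
  have -> : S = set0 by apply/seteqP; split => z Sz //; apply: ne; exists z.
  by rewrite inf0.
apply: lb_le_inf; first by exists z.
by move=> r [x _ <-]; exact: sqrtr_ge0.
Qed.

Lemma sigma_min_le A x : sigma_min A ^+ 2 * nsq x <= nsq (A *m x).
Proof.
have [->|xn0] := eqVneq x 0; first by rewrite /nsq dot0l mulr0 nsq_ge0.
have lx : 0 < l2 x.
  rewrite lt_def l2_ge0 andbT; apply/eqP => /eqP; rewrite sqrtr_eq0 => H.
  apply/negP: xn0; rewrite negbK; apply/eqP/nsq_eq0/eqP.
  by rewrite eq_le H nsq_ge0.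
set y := (l2 x)^-1 *: x.
have ny : l2norm y = 1.
  rewrite l2normE -/(l2 _) /l2 nsqZ sqrtrM ?sqr_ge0 // sqrtr_sqr -/(l2 x).
  by rewrite ger0_norm ?invr_ge0 ?l2_ge0 // mulVf // gt_eqF.
have : sigma_min A <= l2norm (A *m y).
  apply: ge_inf; last by exists y.
  by exists 0 => r [z _ <-]; exact: sqrtr_ge0.
rewrite l2normE -/(l2 _) -scalemxAr /l2 nsqZ sqrtrM ?sqr_ge0 // sqrtr_sqr.
rewrite ger0_norm ?invr_ge0 ?l2_ge0 // -/(l2 (A *m x)) ler_pdivlMl // => H.
rewrite -!sqr_l2 -exprMn; apply: lerXn2r; rewrite ?nnegrE ?mulr_ge0 ?l2_ge0 ?sigma_min_ge0 //.
by rewrite mulrC.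
Qed.

End LA2.
Section LA3.
Variable R : realType.
Variable n : nat.
Implicit Types (u v x y : 'cV[R]_n) (A K : 'M[R]_n).

Lemma l2_gt0 x : x != 0 -> 0 < l2 x.
Proof.
move=> xn0; rewrite lt_def l2_ge0 andbT; apply/eqP => /eqP; rewrite sqrtr_eq0 => H.
apply/negP: xn0; rewrite negbK; apply/eqP/nsq_eq0/eqP.
by rewrite eq_le H nsq_ge0.
Qed.

Lemma nsq_normalize x : x != 0 -> nsq ((l2 x)^-1 *: x) = 1.
Proof.
move=> xn0; rewrite nsqZ -sqr_l2 -exprMn mulVf ?expr1n //.
by rewrite gt_eqF // l2_gt0.
Qed.

Lemma normalizeK x : x != 0 -> l2 x *: ((l2 x)^-1 *: x) = x.
Proof. by move=> xn0; rewrite scalerA mulfV ?scale1r // gt_eqF // l2_gt0. Qed.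

Lemma qfZ (c : R) A x : dot (c *: x) (A *m (c *: x)) = c ^+ 2 * dot x (A *m x).
Proof. by rewrite -scalemxAr dotZl dotZr mulrA expr2. Qed.

Lemma inf_form K (S := [set dot y (K *m y) | y in [set y | nsq y = 1]]) :
  (forall x, 0 <= dot x (K *m x)) ->
  [/\ 0 <= inf S, forall x, inf S * nsq x <= dot x (K *m x) &
    forall x, x != 0 -> S !=set0 ].
Proof.
move=> Kp.
have lbS : has_lbound S by exists 0 => r [y _ <-].
have neS x : x != 0 -> S !=set0.
  by move=> xn0; exists (dot ((l2 x)^-1 *: x) (K *m ((l2 x)^-1 *: x))); exists ((l2 x)^-1 *: x) => //; rewrite /= nsq_normalize.
split => //.
- have [[z Sz]|ne] := pselect (exists z, S z); last first.
    have -> : S = set0 by apply/seteqP; split => z Sz //; apply: ne; exists z.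
    by rewrite inf0.
  by apply: lb_le_inf; [exists z | move=> r [y _ <-]].
- move=> x; have [->|xn0] := eqVneq x 0; first by rewrite /nsq !dot0l mulr0.
  rewrite -{2 3}(normalizeK xn0) qfZ sqr_l2 mulrC ler_pM2l; last first.
    by rewrite lt_def nsq_ge0 andbT; apply/eqP => /nsq_eq0 /eqP; rewrite (negbTE xn0).
  by apply: ge_inf => //; exists ((l2 x)^-1 *: x) => //; rewrite /= nsq_normalize.
Qed.

Lemma psd_lower K (s : R) : K^T = K -> (forall x, 0 <= dot x (K *m x)) -> 0 <= s ->
  (forall x, s ^+ 2 * nsq x <= nsq (K *m x)) -> forall x, s * nsq x <= dot x (K *m x).
Proof.
move=> Ks Kp s0 Hs x.
have [->|xn0] := eqVneq x 0; first by rewrite /nsq !dot0l mulr0.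
have [m0 Hm neS] := inf_form Kp.
set S := [set _ | _ in _] in m0 Hm neS; set m := inf S in m0 Hm.
suff sm : s <= m.
  by apply: le_trans (Hm x); rewrite ler_pM2r ?sm //; rewrite lt_def nsq_ge0 andbT; apply/eqP => /nsq_eq0 /eqP; rewrite (negbTE xn0).
rewrite leNgt; apply/negP => ms.
set Kp' := K - m%:M.
have qKp y : dot y (Kp' *m y) = dot y (K *m y) - m * nsq y.
  by rewrite mulmxBl mul_scalar_mx dotBr dotZr.
have Kpp z : 0 <= dot z (Kp' *m z) by rewrite qKp subr_ge0 Hm.
have Kps : Kp'^T = Kp' by rewrite linearB /= tr_scalar_mx Ks.
set N := Num.sqrt (frob Kp').
have N0 : 0 <= N by exact: sqrtr_ge0.
have key y : nsq y = 1 -> s ^+ 2 - m ^+ 2 <= dot y (Kp' *m y) * (N + 2 * m).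
  move=> ny; set w := Kp' *m y; set d := dot y (Kp' *m y).
  have d0 : 0 <= d by exact: Kpp.
  have H1 := psd_cs Kps Kpp y w.
  have E1 : dot y (Kp' *m w) = nsq w by rewrite dot_mulmx Kps dotC.
  have H2 : dot w (Kp' *m w) <= N * nsq w.
    apply: le_trans (ler_norm _) _; apply: le_trans (dot_le _ _) _.
    apply: le_trans (ler_wpM2l (l2_ge0 w) (l2_mul Kp' w)) _.
    by rewrite -sqr_l2 le_eqVlt; apply/orP; left; apply/eqP; rewrite /N; ring.
  have H3 : nsq w <= d * N.
    have [w0|wn0] := eqVneq (nsq w) 0; first by rewrite w0 mulr_ge0.
    have wp : 0 < nsq w by rewrite lt_def wn0 nsq_ge0.
    rewrite -(ler_pM2r wp) -expr2 -E1; apply: le_trans H1 _.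
    by rewrite -mulrA E1; apply: ler_wpM2l.
  have EK : K *m y = w + m *: y by rewrite /w mulmxBl mul_scalar_mx addrNK.
  have := Hs y; rewrite ny mulr1 EK nsqD dotZr nsqZ ny mulr1.
  have -> : dot w y = d by rewrite dotC.
  move: H3; set a := nsq w => H3 H4.
  have : s ^+ 2 - m ^+ 2 <= d * N + 2 * (m * d) by lra.
  move=> H5; apply: le_trans H5 _; rewrite le_eqVlt; apply/orP; left; apply/eqP; ring.
have gap : 0 < s ^+ 2 - m ^+ 2.
  by rewrite subr_gt0 ltr_pXn2r // nnegrE.
set c := N + 2 * m.
have c0 : 0 <= c by rewrite addr_ge0 // mulr_ge0.
set eps := (s ^+ 2 - m ^+ 2) / (c + 1).
have eps0 : 0 < eps by rewrite divr_gt0 // ltr_wpDl.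
have hinf : has_inf S.
  by split; [exact: neS xn0 | exists 0 => r [y _ <-]].
have [e [y ny <-] ey] := inf_adherent eps0 hinf.
have := key y ny; rewrite qKp ny mulr1 -/m => H.
have epsE : eps * (c + 1) = s ^+ 2 - m ^+ 2 by rewrite /eps mulfVK // gt_eqF // ltr_wpDl.
have dle : dot y (K *m y) - m <= eps by lra.
have d0 : 0 <= dot y (K *m y) - m by rewrite -(mulr1 m) -ny -qKp Kpp.
have : (dot y (K *m y) - m) * c <= eps * c by rewrite ler_wpM2r.
have H' : s ^+ 2 - m ^+ 2 <= (dot y (K *m y) - m) * c by exact: H.
move: H' epsE eps0; clearbody c eps; move=> H7 epsE eps0 H6; clear -H7 epsE eps0 H6.
lra.
Qed.

End LA3.
Section LA4.
Variable R : realType.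
Variable n : nat.
Implicit Types (u v x y : 'cV[R]_n) (A K F C H U L : 'M[R]_n).

Definition qform F C H (a b : 'cV[R]_n) :=
  dot a (F *m a) - 2 * dot a (C *m b) + dot b (H *m b).

Lemma schur F C H a b : F^T = F -> F \in unitmx ->
  qform F C H a b = dot (a - invmx F *m C *m b) (F *m (a - invmx F *m C *m b))
                    + qform F C H (invmx F *m C *m b) b.
Proof.
move=> Fs Fu; rewrite /qform.
set Lb := invmx F *m C *m b.
have FL : F *m Lb = C *m b by rewrite /Lb !mulmxA mulmxV // mul1mx.
rewrite mulmxBr FL !dotBl !dotBr.
have -> : dot Lb (F *m a) = dot a (C *m b) by rewrite dot_mulmx Fs FL dotC.
ring.
Qed.

Lemma qform_lower F C H (s : R) a b : F^T = F -> F \in unitmx ->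
  (forall a b, 0 <= qform F C H a b) ->
  (forall x, s * nsq x <= dot x (F *m x)) ->
  s * nsq (a - invmx F *m C *m b) <= qform F C H a b.
Proof.
move=> Fs Fu Hq Hs; rewrite schur //.
by apply: le_trans (Hs _) _; rewrite lerDl.
Qed.

Lemma unit_of_lower F (s : R) : 0 < s -> (forall x, s * nsq x <= dot x (F *m x)) ->
  F \in unitmx.
Proof.
move=> s0 Hs; rewrite unitmxE unitfE; apply/negP => /det0P [v vn0 vF].
have : F^T *m v^T = 0 by rewrite -trmx_mul vF trmx0.
move=> H0.
have := Hs v^T; rewrite dot_mulmx H0 dot0l => H1.
have : nsq v^T = 0.
  by apply/eqP; rewrite eq_le nsq_ge0 andbT -(pmulr_rle0 _ s0).
move=> /nsq_eq0 /(congr1 trmx); rewrite trmxK trmx0 => vz.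
by rewrite vz eqxx in vn0.
Qed.

Lemma l2_dot_bound a (Z : 'M[R]_n) b (c : R) : (forall y, l2 (Z *m y) <= c * l2 y) ->
  `|dot a (Z *m b)| <= c * (l2 a * l2 b).
Proof.
move=> HZ; apply: le_trans (dot_le _ _) _.
rewrite mulrCA; apply: ler_wpM2l; first exact: l2_ge0.
exact: HZ.
Qed.

Lemma final_pointwise U L (eta : R) : 0 <= eta -> eta <= 1 / 2 ->
  frob (1%:M - U *m L^T) <= eta ^+ 2 ->
  forall f fh g gh,
  (dot f g - dot fh gh) ^+ 2 <= 16 * (eta ^+ 2 * nsq f * nsq g
     + nsq (f - U *m fh) * nsq g + nsq f * nsq (g - L *m gh)
     + nsq (f - U *m fh) * nsq (g - L *m gh)).
Proof.
move=> e0 e1 Hfr f fh g gh.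
set Q := U *m L^T.
have sq : Num.sqrt (frob (1%:M - Q)) <= eta.
  by rewrite -(ger0_norm e0) -sqrtr_sqr ler_sqrt // sqr_ge0.
have B1 x : l2 ((1%:M - Q) *m x) <= eta * l2 x.
  by apply: le_trans (l2_mul _ _) _; apply: ler_wpM2r => //; exact: l2_ge0.
have B2 x : l2 ((1%:M - Q^T) *m x) <= eta * l2 x.
  have -> : 1%:M - Q^T = (1%:M - Q)^T by rewrite linearB /= trmx1.
  apply: le_trans (l2_mul _ _) _; apply: ler_wpM2r; first exact: l2_ge0.
  by rewrite frob_tr.
have Qu : Q \in unitmx.
  rewrite unitmxE unitfE; apply/negP => /det0P [v vn0 vQ].
  have : Q^T *m v^T = 0 by rewrite -trmx_mul vQ trmx0.
  move=> H0.
  have : v^T = 0.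
    have := B2 v^T; rewrite mulmxBl mul1mx H0 subr0 => H.
    have : l2 v^T <= 0 by have := l2_ge0 v^T; nra.
    move=> H2; apply: nsq_eq0; rewrite -sqr_l2.
    have -> : l2 v^T = 0 by apply/eqP; rewrite eq_le H2 l2_ge0.
    by rewrite expr2 mul0r.
  move=> /(congr1 trmx); rewrite trmxK trmx0 => vz.
  by rewrite vz eqxx in vn0.
have : (U \in unitmx) && (L^T \in unitmx) by rewrite -unitmx_mul.
rewrite unitmx_tr => /andP [Uu Lu].
set Y := (invmx U)^T *m invmx L.
have QY : Q^T *m Y = 1%:M.
  rewrite /Q /Y trmx_mul trmxK mulmxA -(mulmxA L) -trmx_mul mulVmx // trmx1 mulmx1.
  by rewrite mulmxV.
have BY y : l2 (Y *m y) <= 2 * l2 y.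
  set x := Y *m y.
  have Ey : Q^T *m x = y by rewrite /x mulmxA QY mul1mx.
  have dec : Q^T *m x + (1%:M - Q^T) *m x = x by rewrite mulmxBl mul1mx addrC subrK.
  have Hx := l2D (Q^T *m x) ((1%:M - Q^T) *m x).
  rewrite dec Ey in Hx.
  have := B2 x.
  have := l2_ge0 x; have := l2_ge0 y; nra.
have BIY y : l2 ((1%:M - Y) *m y) <= (2 * eta) * l2 y.
  set x := Y *m y.
  have Ey : Q^T *m x = y by rewrite /x mulmxA QY mul1mx.
  have -> : (1%:M - Y) *m y = - ((1%:M - Q^T) *m x).
    by rewrite !mulmxBl !mul1mx Ey opprB.
  have -> : l2 (- ((1%:M - Q^T) *m x)) = l2 ((1%:M - Q^T) *m x).
    by rewrite /l2 /nsq dotNl dotNr opprK.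
  apply: le_trans (B2 _) _; have := BY y; rewrite -/x => h; have := l2_ge0 x; nra.
set d := f - U *m fh; set e := g - L *m gh.
have Efh : fh = invmx U *m (f - d) by rewrite /d opprB addrC subrK mulKmx.
have Egh : gh = invmx L *m (g - e) by rewrite /e opprB addrC subrK mulKmx.
have Eid : dot f g - dot fh gh = dot f ((1%:M - Y) *m g) + dot d (Y *m g)
            + dot f (Y *m e) - dot d (Y *m e).
  have E2 : dot fh gh = dot (f - d) (Y *m (g - e)).
    rewrite {1}Efh {1}Egh dotC dot_mulmx dotC /Y mulmxA //.
  rewrite E2 !mulmxBl !mulmxBr mul1mx !dotBl !dotBr; ring.
rewrite Eid.
have t1 := l2_dot_bound f g BIY.
have t2 := l2_dot_bound d g BY.
have t3 := l2_dot_bound f e BY.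
have t4 := l2_dot_bound d e BY.
rewrite -!sqr_l2.
move: t1 t2 t3 t4.
set a1 := dot f _; set a2 := dot d _; set a3 := dot f _; set a4 := dot d _.
have := l2_ge0 f; have := l2_ge0 g; have := l2_ge0 d; have := l2_ge0 e.
set lf := l2 f; set lg := l2 g; set ld := l2 d; set le := l2 e.
move=> h1 h2 h3 h4 t1 t2 t3 t4.
have s1 : a1 ^+ 2 <= (2 * eta * (lf * lg)) ^+ 2.
  by rewrite -real_normK ?num_real //; apply: lerXn2r; rewrite ?nnegrE ?normr_ge0 ?mulr_ge0.
have s2 : a2 ^+ 2 <= (2 * (ld * lg)) ^+ 2.
  by rewrite -real_normK ?num_real //; apply: lerXn2r; rewrite ?nnegrE ?normr_ge0 ?mulr_ge0.
have s3 : a3 ^+ 2 <= (2 * (lf * le)) ^+ 2.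
  by rewrite -real_normK ?num_real //; apply: lerXn2r; rewrite ?nnegrE ?normr_ge0 ?mulr_ge0.
have s4 : a4 ^+ 2 <= (2 * (ld * le)) ^+ 2.
  by rewrite -real_normK ?num_real //; apply: lerXn2r; rewrite ?nnegrE ?normr_ge0 ?mulr_ge0.
have four : (a1 + a2 + a3 - a4) ^+ 2 <= 4 * (a1 ^+ 2 + a2 ^+ 2 + a3 ^+ 2 + a4 ^+ 2).
  have : 0 <= (a1 - a2) ^+ 2 + (a1 - a3) ^+ 2 + (a1 + a4) ^+ 2 + (a2 - a3) ^+ 2
              + (a2 + a4) ^+ 2 + (a3 + a4) ^+ 2.
    by rewrite !addr_ge0 // sqr_ge0.
  move=> H; rewrite -subr_ge0; apply: le_trans H _; rewrite le_eqVlt; apply/orP; left.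
  apply/eqP; ring.
apply: le_trans four _.
move: s1 s2 s3 s4; rewrite !exprMn => s1 s2 s3 s4.
lra.
Qed.

End LA4.
Section AN.
Variable R : realType.
Variables (d : measure_display) (T : measurableType d).
Variable P : probability T R.
Variable n : nat.

Definition cv (x : 'I_n -> R) : 'cV[R]_n := \col_i x i.
Definition gram (u v : T -> 'I_n -> R) : 'M[R]_n :=
  \matrix_(i, j) Rintegral P setT (fun x => u x i * v x j).

Lemma int_mul (a b : T -> R) : measurable_fun setT a -> measurable_fun setT b ->
  P.-integrable setT (fun x => (a x ^+ 2)%:E) ->
  P.-integrable setT (fun x => (b x ^+ 2)%:E) ->
  P.-integrable setT (fun x => (a x * b x)%:E).
Proof.
move=> ma mb ia ib.
apply: (le_integrable _ _ _ (integrableD _ ia ib)) => //.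
  by apply/measurable_EFinP; exact: measurable_funM.
move=> x _ /=; rewrite lee_fin.
rewrite [X in _ <= X]ger0_norm ?addr_ge0 ?sqr_ge0 //.
have := sqr_ge0 (a x - b x); have := sqr_ge0 (a x + b x).
rewrite normrM; case: (ler0P (a x)) => ha; case: (ler0P (b x)) => hb; nra.
Qed.

Lemma dot_cv (a : 'cV[R]_n) x : dot a (cv x) = \sum_k a k 0 * x k.
Proof. by apply: eq_bigr => k _; rewrite mxE. Qed.

Lemma int_bilin (u v : T -> 'I_n -> R) (a b : 'cV[R]_n) :
  (forall k l, P.-integrable setT (fun w => (u w k * v w l)%:E)) ->
  P.-integrable setT (fun w => (dot a (cv (u w)) * dot b (cv (v w)))%:E) /\
  (\int[P]_w (dot a (cv (u w)) * dot b (cv (v w)))%:E = (dot a (gram u v *m b))%:E)%E.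
Proof.
move=> Huv.
have E w : (dot a (cv (u w)) * dot b (cv (v w)))%:E =
    (\sum_k \sum_l (a k 0 * b l 0)%:E * (u w k * v w l)%:E)%E.
  rewrite !dot_cv mulr_suml -sumEFin; apply: eq_bigr => k _.
  rewrite mulr_sumr -sumEFin; apply: eq_bigr => l _.
  by rewrite -EFinM; congr EFin; ring.
have Ik k : P.-integrable setT (fun w => \sum_l (a k 0 * b l 0)%:E * (u w k * v w l)%:E)%E.
  by apply: (integrable_sum measurableT) => l _; apply: integrableZl.
split.
  apply: (eq_integrable measurableT _ _ _ (integrable_sum measurableT _ (fun k _ => Ik k))) => w _; by rewrite E.
under eq_integral => w _ do rewrite E.
rewrite (integral_sum measurableT) //.
rewrite dotE mxE -sumEFin; apply: eq_bigr => k _.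
rewrite (integral_sum measurableT) //; last by move=> l; apply: integrableZl.
rewrite !mxE mulr_sumr -sumEFin; apply: eq_bigr => l _.
rewrite integralZl //.
rewrite /gram mxE /Rintegral !EFinM fineK; last exact: integrable_fin_num.
by rewrite -muleA; congr (_ * _)%E; exact: muleC.
Qed.

End AN.
Section AN2.
Variable R : realType.
Variables (d : measure_display) (T : measurableType d).
Variable P : probability T R.
Variable n : nat.

Definition sqint (u : T -> 'I_n -> R) :=
  (forall i, measurable_fun setT (fun w => u w i)) /\
  (forall i, P.-integrable setT (fun w => (u w i ^+ 2)%:E)).

Lemma sqint_prod u v : sqint u -> sqint v ->
  forall k l, P.-integrable setT (fun w => (u w k * v w l)%:E).
Proof. by move=> [mu iu] [mv iv] k l; apply: int_mul. Qed.

Lemma int_quad (u v : T -> 'I_n -> R) (a b : 'cV[R]_n) : sqint u -> sqint v ->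
  P.-integrable setT (fun w => ((dot a (cv (u w)) - dot b (cv (v w))) ^+ 2)%:E) /\
  (\int[P]_w ((dot a (cv (u w)) - dot b (cv (v w))) ^+ 2)%:E
     = (qform (gram P u u) (gram P u v) (gram P v v) a b)%:E)%E.
Proof.
move=> su sv.
have [i1 e1] := int_bilin a a (sqint_prod su su).
have [i2 e2] := int_bilin a b (sqint_prod su sv).
have [i3 e3] := int_bilin b b (sqint_prod sv sv).
have E w : ((dot a (cv (u w)) - dot b (cv (v w))) ^+ 2)%:E =
   ((dot a (cv (u w)) * dot a (cv (u w)))%:E
    + (-2)%:E * (dot a (cv (u w)) * dot b (cv (v w)))%:E
    + (dot b (cv (v w)) * dot b (cv (v w)))%:E)%E.
  by rewrite -EFinM -!EFinD; congr EFin; ring.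
have i2' := integrableZl measurableT (-2) i2.
have i12 := integrableD measurableT i1 i2'.
split.
  apply: (eq_integrable measurableT _ _ _ (integrableD measurableT i12 i3)) => w _.
  by rewrite E.
under eq_integral => w _ do rewrite E.
rewrite (integralD measurableT) // (integralD measurableT) // integralZl // e1 e2 e3.
by rewrite -EFinM -!EFinD /qform; congr EFin; ring.
Qed.

Lemma dot_delta (k : 'I_n) (x : 'cV[R]_n) : dot (delta_mx k 0) x = x k 0.
Proof.
rewrite /dot (bigD1 k) //= big1 ?addr0; first by rewrite mxE !eqxx mul1r.
by move=> i ik; rewrite mxE (negbTE ik) mul0r.
Qed.

Lemma int_nsq (u v : T -> 'I_n -> R) (Z M : 'M[R]_n) : sqint u -> sqint v ->
  (\int[P]_w (nsq (Z *m cv (u w) - M *m cv (v w)))%:E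
     = (\sum_k qform (gram P u u) (gram P u v) (gram P v v)
                     (Z^T *m delta_mx k 0) (M^T *m delta_mx k 0))%:E)%E.
Proof.
move=> su sv.
have E w : (nsq (Z *m cv (u w) - M *m cv (v w)))%:E =
   (\sum_k ((dot (Z^T *m delta_mx k 0) (cv (u w)) - dot (M^T *m delta_mx k 0) (cv (v w))) ^+ 2)%:E)%E.
  rewrite sumEFin; congr EFin; apply: eq_bigr => k _.
  by rewrite -!dot_mulmx -dotBr dot_delta expr2.
under eq_integral => w _ do rewrite E.
rewrite (integral_sum measurableT); last by move=> k; case: (int_quad (Z^T *m delta_mx k 0) (M^T *m delta_mx k 0) su sv).
rewrite -sumEFin; apply: eq_bigr => k _.
by case: (int_quad (Z^T *m delta_mx k 0) (M^T *m delta_mx k 0) su sv).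
Qed.

End AN2.
Section AN3.
Variable R : realType.
Variables (dW dV : measure_display) (W : measurableType dW) (V : measurableType dV).
Variables (PW : probability W R) (PV : probability V R).
Variable n : nat.

Lemma bilin_dot (u : W -> 'I_n -> R) (v : V -> 'I_n -> R) x y :
  bilin u v x y = dot (cv (v y)) (cv (u x)).
Proof. by rewrite dot_cv /bilin; apply: eq_bigr => i _; rewrite mxE mulrC. Qed.

Lemma bilin_dot' (u : W -> 'I_n -> R) (v : V -> 'I_n -> R) x y :
  bilin u v x y = dot (cv (u x)) (cv (v y)).
Proof. by rewrite dot_cv /bilin; apply: eq_bigr => i _; rewrite mxE. Qed.

Lemma meas_bilin (u : W -> 'I_n -> R) (v : V -> 'I_n -> R) :
  (forall i, measurable_fun setT (fun w => u w i)) ->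
  (forall i, measurable_fun setT (fun w => v w i)) ->
  measurable_fun setT (fun z : W * V => bilin u v z.1 z.2).
Proof.
move=> mu mv; rewrite /bilin; apply: measurable_sum => i.
apply: measurable_funM.
  exact: (measurableT_comp (mu i) measurable_fst).
exact: (measurableT_comp (mv i) measurable_snd).
Qed.

Lemma meas_risk (u1 u2 : W -> 'I_n -> R) (v1 v2 : V -> 'I_n -> R) :
  (forall i, measurable_fun setT (fun w => u1 w i)) ->
  (forall i, measurable_fun setT (fun w => u2 w i)) ->
  (forall i, measurable_fun setT (fun w => v1 w i)) ->
  (forall i, measurable_fun setT (fun w => v2 w i)) ->
  measurable_fun setT (fun z : W * V => ((bilin u1 v1 z.1 z.2 - bilin u2 v2 z.1 z.2) ^+ 2)%:E).
Proof.
move=> m1 m2 m3 m4; apply/measurable_EFinP; apply: measurable_funX.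
by apply: measurable_funB; apply: meas_bilin.
Qed.

Lemma risk_fub1 (u1 u2 : W -> 'I_n -> R) (v1 v2 : V -> 'I_n -> R) :
  sqint PW u1 -> sqint PW u2 -> sqint PV v1 -> sqint PV v2 ->
  (\int[PW \x PV]_z ((bilin u1 v1 z.1 z.2 - bilin u2 v2 z.1 z.2) ^+ 2)%:E
   = \int[PV]_y (qform (gram PW u1 u1) (gram PW u1 u2) (gram PW u2 u2)
                   (cv (v1 y)) (cv (v2 y)))%:E)%E.
Proof.
move=> s1 s2 s3 s4.
rewrite (fubini_tonelli2 _ (meas_risk s1.1 s2.1 s3.1 s4.1)); last first.
  by move=> z; rewrite lee_fin sqr_ge0.
apply: eq_integral => y _; rewrite /fubini_G /=.
under eq_integral => x _ do rewrite !bilin_dot.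
by case: (int_quad (cv (v1 y)) (cv (v2 y)) s1 s2).
Qed.

Lemma risk_fub2 (u1 u2 : W -> 'I_n -> R) (v1 v2 : V -> 'I_n -> R) :
  sqint PW u1 -> sqint PW u2 -> sqint PV v1 -> sqint PV v2 ->
  (\int[PW \x PV]_z ((bilin u1 v1 z.1 z.2 - bilin u2 v2 z.1 z.2) ^+ 2)%:E
   = \int[PW]_x (qform (gram PV v1 v1) (gram PV v1 v2) (gram PV v2 v2)
                   (cv (u1 x)) (cv (u2 x)))%:E)%E.
Proof.
move=> s1 s2 s3 s4.
rewrite (fubini_tonelli1 _ (meas_risk s1.1 s2.1 s3.1 s4.1)); last first.
  by move=> z; rewrite lee_fin sqr_ge0.
apply: eq_integral => x _; rewrite /fubini_F /=.
under eq_integral => y _ do rewrite !bilin_dot'.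
by case: (int_quad (cv (u1 x)) (cv (u2 x)) s3 s4).
Qed.

Lemma int_sep (a : W -> R) (b : V -> R) (A B : R) :
  measurable_fun setT a -> measurable_fun setT b ->
  (forall x, 0 <= a x) -> (forall y, 0 <= b y) ->
  (\int[PW]_x (a x)%:E = A%:E)%E -> (\int[PV]_y (b y)%:E = B%:E)%E ->
  (\int[PW \x PV]_z (a z.1 * b z.2)%:E = (A * B)%:E)%E.
Proof.
move=> ma mb a0 b0 IA IB.
have B0 : 0 <= B by rewrite -lee_fin -IB; apply: integral_ge0 => y _; rewrite lee_fin.
rewrite (fubini_tonelli1 (fun z : W * V => (a z.1 * b z.2)%:E)); last 2 first.
- apply/measurable_EFinP; apply: measurable_funM.
    exact: (measurableT_comp ma measurable_fst).
  exact: (measurableT_comp mb measurable_snd).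
- by move=> z; rewrite lee_fin mulr_ge0.
have inner x : (\int[PV]_y (a x * b y)%:E = (a x * B)%:E)%E.
  under eq_integral => y _ do rewrite EFinM.
  rewrite (ge0_integralZl_EFin _ measurableT) //= ?IB //.
    by move=> y _; rewrite lee_fin.
  by apply/measurable_EFinP.
transitivity (\int[PW]_x (a x * B)%:E)%E.
  by apply: eq_integral => x _; rewrite /fubini_F /= inner.
under eq_integral => x _ do rewrite mulrC EFinM.
rewrite (ge0_integralZl_EFin _ measurableT) //=.
- by rewrite IA -EFinM mulrC.
- by move=> x _; rewrite lee_fin.
- by apply/measurable_EFinP.
Qed.

End AN3.
Section H1.
Variable R : realType.
Variables (d : measure_display) (T : measurableType d).
Variable P : probability T R.
Variable n : nat.

Lemma int_nsq_int (u v : T -> 'I_n -> R) (Z M : 'M[R]_n) : sqint P u -> sqint P v ->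
  P.-integrable setT (fun w => (nsq (Z *m cv (u w) - M *m cv (v w)))%:E).
Proof.
move=> su sv.
have E w : (nsq (Z *m cv (u w) - M *m cv (v w)))%:E =
   (\sum_k ((dot (Z^T *m delta_mx k 0) (cv (u w)) - dot (M^T *m delta_mx k 0) (cv (v w))) ^+ 2)%:E)%E.
  rewrite sumEFin; congr EFin; apply: eq_bigr => k _.
  by rewrite -!dot_mulmx -dotBr dot_delta expr2.
apply: (eq_integrable measurableT _ _ _ (integrable_sum measurableT _ _)) => [w _|k _].
  by rewrite E.
by case: (int_quad (Z^T *m delta_mx k 0) (M^T *m delta_mx k 0) su sv).
Qed.

Lemma int_lower (q r : T -> R) (s E : R) : 0 <= s -> measurable_fun setT q ->
  P.-integrable setT (fun t => (r t)%:E) -> (forall t, 0 <= r t) ->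
  (forall t, s * r t <= q t) -> (\int[P]_t (r t)%:E = E%:E)%E ->
  ((s * E)%:E <= \int[P]_t (q t)%:E)%E.
Proof.
move=> s0 mq ir r0 H IE.
rewrite EFinM -IE -integralZl //.
apply: ge0_le_integral => //.
- by move=> t _; rewrite -EFinM lee_fin mulr_ge0.
- by apply/measurable_EFinP; apply: measurable_funM => //; apply/measurable_EFinP; exact: (measurable_int _ ir).
- by apply/measurable_EFinP.
- by move=> t _; rewrite -EFinM lee_fin.
Qed.

Lemma gram_sym (u : T -> 'I_n -> R) : (gram P u u)^T = gram P u u.
Proof.
apply/matrixP => i j; rewrite !mxE; apply: eq_Rintegral => x _; exact: mulrC.
Qed.

Lemma qform_ge0 (u v : T -> 'I_n -> R) a b : sqint P u -> sqint P v ->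
  0 <= qform (gram P u u) (gram P u v) (gram P v v) a b.
Proof.
move=> su sv; rewrite -lee_fin; case: (int_quad a b su sv) => _ <-.
by apply: integral_ge0 => w _; rewrite lee_fin sqr_ge0.
Qed.

Lemma qform0 (F C H : 'M[R]_n) a : qform F C H a 0 = dot a (F *m a).
Proof. by rewrite /qform !mulmx0 dot0r dot0l mulr0 subr0 addr0. Qed.

Lemma sqint0 : sqint P (fun (_ : T) (_ : 'I_n) => 0 : R).
Proof.
split => i; first exact: measurable_cst.
apply: (eq_integrable measurableT (fun _ => 0%E)) => [w _|]; first by rewrite expr0n.
exact: integrable0.
Qed.

Lemma nsq_simpl (x : 'cV[R]_n) : nsq (1%:M *m x - 0 *m x) = nsq x.
Proof. by rewrite mul1mx mul0mx subr0. Qed.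

Lemma int_nsq1 (u : T -> 'I_n -> R) : sqint P u ->
  (\int[P]_w (nsq (cv (u w)))%:E = (\sum_k dot (delta_mx k 0) (gram P u u *m delta_mx k 0))%:E)%E.
Proof.
move=> su; under eq_integral => w _ do rewrite -nsq_simpl.
rewrite int_nsq //; congr EFin; apply: eq_bigr => k _.
by rewrite trmx1 trmx0 mul1mx mul0mx qform0.
Qed.

Lemma int_nsq1_int (u : T -> 'I_n -> R) : sqint P u ->
  P.-integrable setT (fun w => (nsq (cv (u w)))%:E).
Proof.
move=> su; apply: (eq_integrable measurableT _ _ _ (int_nsq_int 1%:M 0 su su)) => w _.
by rewrite nsq_simpl.
Qed.

End H1.

Section H2.
Variable R : realType.
Variables (dW dV : measure_display) (W : measurableType dW) (V : measurableType dV).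
Variables (PW : probability W R) (PV : probability V R).
Variable n : nat.

Lemma fub1_meas (u1 u2 : W -> 'I_n -> R) (v1 v2 : V -> 'I_n -> R) :
  sqint PW u1 -> sqint PW u2 -> sqint PV v1 -> sqint PV v2 ->
  measurable_fun setT (fun y => qform (gram PW u1 u1) (gram PW u1 u2) (gram PW u2 u2)
                   (cv (v1 y)) (cv (v2 y))).
Proof.
move=> s1 s2 s3 s4; apply/measurable_EFinP.
set f := (fun z : W * V => ((bilin u1 v1 z.1 z.2 - bilin u2 v2 z.1 z.2) ^+ 2)%:E).
have mf : measurable_fun setT f by exact: (meas_risk s1.1 s2.1 s3.1 s4.1).
have -> : (EFin \o (fun y => qform (gram PW u1 u1) (gram PW u1 u2) (gram PW u2 u2)
                   (cv (v1 y)) (cv (v2 y)))) = fubini_G PW f.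
  apply/funext => y; rewrite /fubini_G /f /=.
  under eq_integral => x _ do rewrite !bilin_dot.
  by case: (int_quad (cv (v1 y)) (cv (v2 y)) s1 s2) => _ ->.
apply: (measurable_fun_fubini_tonelli_G f mf).
by move=> z; rewrite lee_fin sqr_ge0.
Qed.

Lemma fub2_meas (u1 u2 : W -> 'I_n -> R) (v1 v2 : V -> 'I_n -> R) :
  sqint PW u1 -> sqint PW u2 -> sqint PV v1 -> sqint PV v2 ->
  measurable_fun setT (fun x => qform (gram PV v1 v1) (gram PV v1 v2) (gram PV v2 v2)
                   (cv (u1 x)) (cv (u2 x))).
Proof.
move=> s1 s2 s3 s4; apply/measurable_EFinP.
set f := (fun z : W * V => ((bilin u1 v1 z.1 z.2 - bilin u2 v2 z.1 z.2) ^+ 2)%:E).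
have mf : measurable_fun setT f by exact: (meas_risk s1.1 s2.1 s3.1 s4.1).
have -> : (EFin \o (fun x => qform (gram PV v1 v1) (gram PV v1 v2) (gram PV v2 v2)
                   (cv (u1 x)) (cv (u2 x)))) = fubini_F PV f.
  apply/funext => x; rewrite /fubini_F /f /=.
  under eq_integral => y _ do rewrite !bilin_dot'.
  by case: (int_quad (cv (u1 x)) (cv (u2 x)) s3 s4) => _ ->.
apply: (measurable_fun_fubini_tonelli_F f mf).
by move=> z; rewrite lee_fin sqr_ge0.
Qed.

Lemma meas_sep (a : W -> R) (b : V -> R) : measurable_fun setT a -> measurable_fun setT b ->
  measurable_fun setT (fun z : W * V => (a z.1 * b z.2)%:E).
Proof.
move=> ma mb; apply/measurable_EFinP; apply: measurable_funM.
  exact: (measurableT_comp ma measurable_fst).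
exact: (measurableT_comp mb measurable_snd).
Qed.

End H2.
Lemma final_arith (R : realType) (sf sg eps M2 a b c e : R) :
  0 < sf -> 0 < sg -> 0 <= eps -> 0 <= a -> 0 <= b -> 0 <= c -> 0 <= e ->
  sg * a <= M2 -> sf * b <= M2 -> sg * c <= eps ^+ 2 -> sf * e <= eps ^+ 2 ->
  sf * sg <= M2 -> eps ^+ 2 <= sf * sg / 4 ->
  16 * (eps ^+ 2 / (sf * sg) * a * b + c * b + a * e + c * e)
    <= 64 * eps ^+ 2 * M2 ^+ 2 / (sf * sg) ^+ 2.
Proof.
move=> sf0 sg0 e0 a0 b0 c0 e0' Ha Hb Hc He Hs He2.
set s := sf * sg.
have s0 : 0 < s by rewrite mulr_gt0.
have M0 : 0 <= M2 by apply: le_trans (ltW s0) Hs.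
set E2 := eps ^+ 2.
have E20 : 0 <= E2 by rewrite sqr_ge0.
have t1 : E2 / s * a * b * s ^+ 2 <= E2 * M2 ^+ 2.
  have -> : E2 / s * a * b * s ^+ 2 = E2 * ((sg * a) * (sf * b)).
    by rewrite /s; field; rewrite !gt_eqF.
  rewrite ler_wpM2l // expr2; apply: ler_pM => //; by rewrite mulr_ge0 // ltW.
have t2 : c * b * s ^+ 2 <= E2 * M2 ^+ 2.
  have -> : c * b * s ^+ 2 = ((sg * c) * (sf * b)) * s by rewrite /s; ring.
  have h1 : (sg * c) * (sf * b) <= E2 * M2.
    by apply: ler_pM => //; rewrite mulr_ge0 // ltW.
  have h2 : 0 <= (sg * c) * (sf * b) by rewrite !mulr_ge0 // ltW.
  apply: le_trans (ler_pM h2 (ltW s0) h1 Hs) _.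
  by rewrite expr2 mulrA.
have t3 : a * e * s ^+ 2 <= E2 * M2 ^+ 2.
  have -> : a * e * s ^+ 2 = ((sg * a) * (sf * e)) * s by rewrite /s; ring.
  have h1 : (sg * a) * (sf * e) <= M2 * E2.
    by apply: ler_pM => //; rewrite mulr_ge0 // ltW.
  have h2 : 0 <= (sg * a) * (sf * e) by rewrite !mulr_ge0 // ltW.
  apply: le_trans (ler_pM h2 (ltW s0) h1 Hs) _.
  by rewrite expr2 [M2 * E2]mulrC mulrA.
have t4 : c * e * s ^+ 2 <= E2 * M2 ^+ 2 / 4.
  have -> : c * e * s ^+ 2 = ((sg * c) * (sf * e)) * s by rewrite /s; ring.
  have h1 : (sg * c) * (sf * e) <= E2 * E2.
    by apply: ler_pM => //; rewrite mulr_ge0 // ltW.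
  have h2 : 0 <= (sg * c) * (sf * e) by rewrite !mulr_ge0 // ltW.
  apply: le_trans (ler_pM h2 (ltW s0) h1 (lexx s)) _.
  have h3 : E2 * s <= s / 4 * s by rewrite ler_pM2r.
  have h4 : s / 4 * s <= M2 ^+ 2 / 4.
    have : s * s <= M2 * M2 by apply: ler_pM => //; exact: ltW.
    move=> h; rewrite expr2; lra.
  have h5 := le_trans (ler_wpM2l E20 h3) (ler_wpM2l E20 h4).
  have -> : E2 * E2 * s = E2 * (E2 * s) by ring.
  by apply: le_trans h5 _; rewrite mulrA.
rewrite ler_pdivlMr ?exprn_gt0 //.
have -> : 16 * (E2 / s * a * b + c * b + a * e + c * e) * s ^+ 2 =
   16 * (E2 / s * a * b * s ^+ 2 + c * b * s ^+ 2 + a * e * s ^+ 2 + c * e * s ^+ 2).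
  by ring.
have : 0 <= E2 * M2 ^+ 2 by rewrite mulr_ge0 // sqr_ge0.
lra.
Qed.

Lemma sigma_pos_dim (R : realType) n (A : 'M[R]_n) : 0 < sigma_min A -> (0 < n)%N.
Proof.
case: n A => [|n] A //.
rewrite /sigma_min.
have -> : [set l2norm (A *m x) | x in [set x : 'cV[R]_0 | l2norm x = 1]] = set0.
  apply/seteqP; split => // r [x hx _]; move: hx; rewrite /= /l2norm big_ord0 sqrtr0.
  by move=> /eqP; rewrite eq_sym oner_eq0.
by rewrite inf0 ltxx.
Qed.

Unset Implicit Arguments.
Set Strict Implicit.

Theorem mainTheorem6 (R : realType) (dW dV : measure_display)
  (W : measurableType dW) (V : measurableType dV) (p : nat)
  (fs fh : W -> 'I_p -> R) (gs gh : V -> 'I_p -> R)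
  (DW : bool -> probability W R) (DV : bool -> probability V R)
  (eps Ms : R) :
  (* measurability of the feature maps (componentwise) *)
  (forall i, measurable_fun setT (fun w => fs w i)) ->
  (forall i, measurable_fun setT (fun w => fh w i)) ->
  (forall i, measurable_fun setT (fun v => gs v i)) ->
  (forall i, measurable_fun setT (fun v => gh v i)) ->
  (* finiteness of the relevant (second) moments; index true = 1, false = 2 *)
  (forall b i, (DW b).-integrable setT (fun w => (fs w i ^+ 2)%:E)) ->
  (forall b i, (DW b).-integrable setT (fun w => (fh w i ^+ 2)%:E)) ->
  (forall b i, (DV b).-integrable setT (fun v => (gs v i ^+ 2)%:E)) ->
  (forall b i, (DV b).-integrable setT (fun v => (gh v i ^+ 2)%:E)) ->
  0 <= eps ->
  (* hypotheses for all (i,j) <> (2,2) *)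
  (forall bi bj, bi || bj ->
     (risk (DW bi) (DV bj) fs fh gs gh <= (eps ^+ 2)%:E)%E /\
     (sq_moment (DW bi) (DV bj) fs gs <= (Ms ^+ 2)%:E)%E) ->
  (* sigma_star^2 := sigma_p(E_{D_W1}[fs fs^T]) * sigma_p(E_{D_V1}[gs gs^T]) > 0 *)
  0 < sigma_min (second_moment (DW true) fs) *
      sigma_min (second_moment (DV true) gs) ->
  eps < Num.sqrt (sigma_min (second_moment (DW true) fs) *
                  sigma_min (second_moment (DV true) gs)) / 2 ->
  (risk (DW false) (DV false) fs fh gs gh <=
     (64 * eps ^+ 2 * Ms ^+ 4 /
       (sigma_min (second_moment (DW true) fs) *
        sigma_min (second_moment (DV true) gs)) ^+ 2)%:E)%E.
Proof.
move=> mfs mfh mgs mgh ifs ifh igs igh eps0 Hr Hsig Heps.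
have sfs b : sqint (DW b) fs := conj mfs (ifs b).
have sfh b : sqint (DW b) fh := conj mfh (ifh b).
have sgs b : sqint (DV b) gs := conj mgs (igs b).
have sgh b : sqint (DV b) gh := conj mgh (igh b).
have EF : second_moment (DW true) fs = gram (DW true) fs fs by [].
have EG : second_moment (DV true) gs = gram (DV true) gs gs by [].
rewrite EF EG in Hsig Heps *.
set F1 := gram (DW true) fs fs in Hsig Heps *.
set G1 := gram (DV true) gs gs in Hsig Heps *.
set sf := sigma_min F1 in Hsig Heps *.
set sg := sigma_min G1 in Hsig Heps *.
have sf0 : 0 < sf.
  rewrite lt_def sigma_min_ge0 andbT; apply/eqP => h; move: Hsig; rewrite h mul0r ltxx //.
have sg0 : 0 < sg.
  rewrite lt_def sigma_min_ge0 andbT; apply/eqP => h; move: Hsig; rewrite h mulr0 ltxx //.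
have psdF x : 0 <= dot x (F1 *m x).
  by rewrite -(qform0 F1 (gram (DW true) fs fs) (gram (DW true) fs fs)); apply: qform_ge0.
have psdG x : 0 <= dot x (G1 *m x).
  by rewrite -(qform0 G1 (gram (DV true) gs gs) (gram (DV true) gs gs)); apply: qform_ge0.
have lowF x : sf * nsq x <= dot x (F1 *m x).
  by apply: psd_lower (gram_sym _ _) psdF (sigma_min_ge0 _) (sigma_min_le _) x.
have lowG x : sg * nsq x <= dot x (G1 *m x).
  by apply: psd_lower (gram_sym _ _) psdG (sigma_min_ge0 _) (sigma_min_le _) x.
have F1u : F1 \in unitmx := unit_of_lower sf0 lowF.
have G1u : G1 \in unitmx := unit_of_lower sg0 lowG.
set L := invmx F1 *m gram (DW true) fs fh.
set U := invmx G1 *m gram (DV true) gs gh.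
have Wpt a b : sf * nsq (a - L *m b) <=
    qform F1 (gram (DW true) fs fh) (gram (DW true) fh fh) a b.
  apply: qform_lower => //; first exact: gram_sym.
  by move=> a' b'; apply: qform_ge0.
have Vpt a b : sg * nsq (a - U *m b) <=
    qform G1 (gram (DV true) gs gh) (gram (DV true) gh gh) a b.
  apply: qform_lower => //; first exact: gram_sym.
  by move=> a' b'; apply: qform_ge0.
pose z0W := fun (_ : W) (_ : 'I_p) => (0 : R).
pose z0V := fun (_ : V) (_ : 'I_p) => (0 : R).
have cv0 (x : 'I_p -> R) : x = (fun _ => 0) -> cv x = 0.
  by move=> ->; apply/matrixP => i j; rewrite !mxE.
have sqm b b' : sq_moment (DW b) (DV b') fs gs =
   (\int[(DW b \x DV b')%E]_z ((bilin fs gs z.1 z.2 - bilin z0W z0V z.1 z.2) ^+ 2)%:E)%E.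
  rewrite /sq_moment; apply: eq_integral => z _.
  by rewrite /bilin [X in _ - X]big1 ?subr0 // => k _; rewrite mulr0.
pose Ee j := \sum_k qform (gram (DV j) gs gs) (gram (DV j) gs gh) (gram (DV j) gh gh)
               (1%:M^T *m delta_mx k 0) (L^T *m delta_mx k 0).
have IEe j : (\int[DV j]_y (nsq (1%:M *m cv (gs y) - L *m cv (gh y)))%:E = (Ee j)%:E)%E.
  exact: int_nsq.
have Ee_bd j : sf * Ee j <= eps ^+ 2.
  have h := (Hr true j isT).1.
  rewrite /risk (risk_fub1 (sfs true) (sfh true) (sgs j) (sgh j)) in h.
  rewrite -lee_fin; apply: le_trans h.
  apply: int_lower (ltW sf0) (fub1_meas (sfs true) (sfh true) (sgs j) (sgh j))
     (int_nsq_int _ _ (sgs j) (sgh j)) (fun y => nsq_ge0 _) _ (IEe j).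
  by move=> y; rewrite mul1mx; exact: Wpt.
pose Ed i := \sum_k qform (gram (DW i) fs fs) (gram (DW i) fs fh) (gram (DW i) fh fh)
               (1%:M^T *m delta_mx k 0) (U^T *m delta_mx k 0).
have IEd i : (\int[DW i]_x (nsq (1%:M *m cv (fs x) - U *m cv (fh x)))%:E = (Ed i)%:E)%E.
  exact: int_nsq.
have Ed_bd i : sg * Ed i <= eps ^+ 2.
  have h := (Hr i true (orbT _)).1.
  rewrite /risk (risk_fub2 (sfs i) (sfh i) (sgs true) (sgh true)) in h.
  rewrite -lee_fin; apply: le_trans h.
  apply: int_lower (ltW sg0) (fub2_meas (sfs i) (sfh i) (sgs true) (sgh true))
     (int_nsq_int _ _ (sfs i) (sfh i)) (fun y => nsq_ge0 _) _ (IEd i).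
  by move=> x; rewrite mul1mx; exact: Vpt.
pose Ef i := \sum_k dot (delta_mx k 0) (gram (DW i) fs fs *m delta_mx k 0).
have IEf i : (\int[DW i]_x (nsq (cv (fs x)))%:E = (Ef i)%:E)%E by exact: int_nsq1.
have Ef_bd i : sg * Ef i <= Ms ^+ 2.
  have h := (Hr i true (orbT _)).2.
  rewrite sqm (risk_fub2 (sfs i) (sqint0 _ _) (sgs true) (sqint0 _ _)) in h.
  rewrite -lee_fin; apply: le_trans h.
  apply: int_lower (ltW sg0) (fub2_meas (sfs i) (sqint0 _ _) (sgs true) (sqint0 _ _))
     (int_nsq1_int (sfs i)) (fun y => nsq_ge0 _) _ (IEf i).
  by move=> x; rewrite (cv0 (z0W x)) // qform0; exact: lowG.
pose Eg j := \sum_k dot (delta_mx k 0) (gram (DV j) gs gs *m delta_mx k 0).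
have IEg j : (\int[DV j]_y (nsq (cv (gs y)))%:E = (Eg j)%:E)%E by exact: int_nsq1.
have Eg_bd j : sf * Eg j <= Ms ^+ 2.
  have h := (Hr true j isT).2.
  rewrite sqm (risk_fub1 (sfs true) (sqint0 _ _) (sgs j) (sqint0 _ _)) in h.
  rewrite -lee_fin; apply: le_trans h.
  apply: int_lower (ltW sf0) (fub1_meas (sfs true) (sqint0 _ _) (sgs j) (sqint0 _ _))
     (int_nsq1_int (sgs j)) (fun y => nsq_ge0 _) _ (IEg j).
  by move=> y; rewrite (cv0 (z0V y)) // qform0; exact: lowF.
have p0 : (0 < p)%N := sigma_pos_dim sf0.
have nsqd (k : 'I_p) : nsq (delta_mx k 0 : 'cV[R]_p) = 1.
  by rewrite /nsq dot_delta mxE !eqxx.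
have Ef1 : sf <= Ef true.
  have : \sum_(k < p) sf <= Ef true.
    apply: ler_sum => k _; apply: le_trans (lowF _); by rewrite nsqd mulr1.
  rewrite sumr_const card_ord -mulr_natr => h; apply: le_trans h.
  have h1 : (1 : R) <= p%:R by rewrite ler1n.
  by rewrite -[X in X <= _]mulr1 ler_wpM2l // ltW.
have Ms_bd : sf * sg <= Ms ^+ 2.
  have := Ef_bd true; have := ltW sg0; move: Ef1; nra.
have Ef0 i : 0 <= Ef i.
  by rewrite -lee_fin -IEf; apply: integral_ge0 => x _; rewrite lee_fin nsq_ge0.
have Eg0 j : 0 <= Eg j.
  by rewrite -lee_fin -IEg; apply: integral_ge0 => x _; rewrite lee_fin nsq_ge0.
have Ed0 i : 0 <= Ed i.
  by rewrite -lee_fin -IEd; apply: integral_ge0 => x _; rewrite lee_fin nsq_ge0.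
have Ee0 j : 0 <= Ee j.
  by rewrite -lee_fin -IEe; apply: integral_ge0 => x _; rewrite lee_fin nsq_ge0.
have frob_bd : sg * frob (1%:M - U *m L^T) <= Ee true.
  rewrite -frob_cols mulr_sumr; apply: ler_sum => k _.
  have -> : (1%:M - U *m L^T) *m delta_mx k (0 : 'I_1) =
      (1%:M : 'M[R]_p)^T *m delta_mx k 0 - U *m (L^T *m delta_mx k 0).
    by rewrite mulmxBl trmx1 !mul1mx mulmxA.
  exact: Vpt.
set s := sf * sg in Hsig Heps Ms_bd.
have s0 : 0 < s by [].
have sq0 : 0 < Num.sqrt s by rewrite sqrtr_gt0.
set eta := eps / Num.sqrt s.
have eta0 : 0 <= eta by rewrite divr_ge0 // ltW.
have eta2 : eta ^+ 2 = eps ^+ 2 / s.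
  by rewrite /eta expr_div_n sqr_sqrtr // ltW.
have eta1 : eta <= 1 / 2.
  rewrite /eta ler_pdivrMr //; apply: ltW; move: Heps; rewrite mulrC; lra.
have eps2 : eps ^+ 2 <= s / 4.
  have e1 : eps * eps <= (Num.sqrt s / 2) * (Num.sqrt s / 2).
    by apply: ler_pM => //; apply: ltW.
  have hs : Num.sqrt s * Num.sqrt s = s by rewrite -expr2 sqr_sqrtr // ltW.
  rewrite expr2; lra.
have frob_eta : frob (1%:M - U *m L^T) <= eta ^+ 2.
  rewrite eta2 ler_pdivlMr // /s.
  have := Ee_bd true; have := frob_ge0 (1%:M - U *m L^T); move: frob_bd sf0 sg0; nra.
pose nf x := nsq (cv (fs x)).
pose ng y := nsq (cv (gs y)).
pose nd x := nsq (1%:M *m cv (fs x) - U *m cv (fh x)).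
pose ne y := nsq (1%:M *m cv (gs y) - L *m cv (gh y)).
have mnf : measurable_fun setT nf.
  by apply/measurable_EFinP; exact: measurable_int (int_nsq1_int (sfs false)).
have mng : measurable_fun setT ng.
  by apply/measurable_EFinP; exact: measurable_int (int_nsq1_int (sgs false)).
have mnd : measurable_fun setT nd.
  by apply/measurable_EFinP; exact: measurable_int (int_nsq_int _ _ (sfs false) (sfh false)).
have mne : measurable_fun setT ne.
  by apply/measurable_EFinP; exact: measurable_int (int_nsq_int _ _ (sgs false) (sgh false)).
have mnf' : measurable_fun setT (fun x => eta ^+ 2 * nf x).
  by apply: measurable_funM => //; exact: measurable_cst.
have Inf' : (\int[DW false]_x (eta ^+ 2 * nf x)%:E = (eta ^+ 2 * Ef false)%:E)%E.
  under eq_integral => x _ do rewrite EFinM.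
  rewrite (ge0_integralZl_EFin _ measurableT) //.
  - by rewrite IEf.
  - by move=> x _; rewrite lee_fin nsq_ge0.
  - by apply/measurable_EFinP.
  - by rewrite sqr_ge0.
have I1 := int_sep mnf' mng (fun x => mulr_ge0 (sqr_ge0 eta) (nsq_ge0 _)) (fun y => nsq_ge0 _) Inf' (IEg false).
have I2 := int_sep mnd mng (fun x => nsq_ge0 _) (fun y => nsq_ge0 _) (IEd false) (IEg false).
have I3 := int_sep mnf mne (fun x => nsq_ge0 _) (fun y => nsq_ge0 _) (IEf false) (IEe false).
have I4 := int_sep mnd mne (fun x => nsq_ge0 _) (fun y => nsq_ge0 _) (IEd false) (IEe false).
have m1 := meas_sep mnf' mng.
have m2 := meas_sep mnd mng.
have m3 := meas_sep mnf mne.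
have m4 := meas_sep mnd mne.
have Ibig : (\int[(DW false \x DV false)%E]_z
     (16 * (eta ^+ 2 * nf z.1 * ng z.2 + nd z.1 * ng z.2 + nf z.1 * ne z.2 + nd z.1 * ne z.2))%:E
   = (16 * (eta ^+ 2 * Ef false * Eg false + Ed false * Eg false + Ef false * Ee false
            + Ed false * Ee false))%:E)%E.
  have n1 z : (0 <= (eta ^+ 2 * nf z.1 * ng z.2)%:E)%E by rewrite lee_fin !mulr_ge0 // ?sqr_ge0 ?nsq_ge0.
  have n2 z : (0 <= (nd z.1 * ng z.2)%:E)%E by rewrite lee_fin !mulr_ge0 // ?nsq_ge0.
  have n3 z : (0 <= (nf z.1 * ne z.2)%:E)%E by rewrite lee_fin !mulr_ge0 // ?nsq_ge0.
  have n4 z : (0 <= (nd z.1 * ne z.2)%:E)%E by rewrite lee_fin !mulr_ge0 // ?nsq_ge0.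
  under eq_integral => z _ do rewrite EFinM !EFinD.
  rewrite (ge0_integralZl_EFin _ measurableT); first last.
  - by [].
  - by apply: emeasurable_funD; [apply: emeasurable_funD; [apply: emeasurable_funD|]|].
  - by move=> z _; rewrite !adde_ge0.
  rewrite (ge0_integralD _ measurableT); first last.
  - exact: m4.
  - by move=> z _; exact: n4.
  - by apply: emeasurable_funD; [apply: emeasurable_funD|].
  - by move=> z _; rewrite !adde_ge0.
  rewrite (ge0_integralD _ measurableT); first last.
  - exact: m3.
  - by move=> z _; exact: n3.
  - by apply: emeasurable_funD.
  - by move=> z _; rewrite !adde_ge0.
  rewrite (ge0_integralD _ measurableT); first last.
  - exact: m2.
  - by move=> z _; exact: n2.
  - exact: m1.
  - by move=> z _; exact: n1.
  by rewrite I1 I2 I3 I4 -!EFinD -EFinM.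
rewrite /risk.
apply: le_trans (_ : _ <= (16 * (eta ^+ 2 * Ef false * Eg false + Ed false * Eg false
     + Ef false * Ee false + Ed false * Ee false))%:E)%E _.
  rewrite -Ibig; apply: ge0_le_integral => //.
  - by move=> z _; rewrite lee_fin sqr_ge0.
  - exact: meas_risk.
  - apply/measurable_EFinP; apply: measurable_funM; first exact: measurable_cst.
    move/measurable_EFinP : m1 => m1'; move/measurable_EFinP : m2 => m2'.
    move/measurable_EFinP : m3 => m3'; move/measurable_EFinP : m4 => m4'.
    by repeat apply: measurable_funD.
  - move=> [x y] _ /=; rewrite lee_fin !bilin_dot' /nf /ng /nd /ne !mul1mx.
    exact: final_pointwise.
rewrite lee_fin eta2.
have h := final_arith sf0 sg0 eps0 (Ef0 false) (Eg0 false) (Ed0 false) (Ee0 false)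
  (Ef_bd false) (Eg_bd false) (Ed_bd false) (Ee_bd false) Ms_bd eps2.
by rewrite -exprM in h.
Qed.
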